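(* Let $H$ be $d^4/dx^4$ in $L_2(\mathbb{R}_+)$ with boundary conditions $u''(0)=\alpha u(0)+\alpha_1u'(0)$, $u'''(0)=-\alpha_2u(0)-\bar\alpha u'(0)$ ($\alpha\in\mathbb{C}$, $\alpha_1,\alpha_2\in\mathbb{R}$). The functions $s(\lambda)=\overline{\Omega(k)}/\Omega(k)$ and $b(\lambda)=(\alpha_0+2i\operatorname{Im}\alpha\,k^2+k^4)/\Omega(k)$, $k=\lambda^{1/4}$, are infinitely differentiable for all $\lambda>0$ (being extended by continuity at a positive eigenvalue of $H$, if there is one). If $\lambda_0$ is a positive eigenvalue of $H$, then $$s(\lambda_0)=\frac{\alpha+i\sqrt{\lambda_0}}{\alpha-i\sqrt{\lambda_0}},\qquad b(\lambda_0)=-\frac{2\sqrt{\lambda_0}}{\alpha-i\sqrt{\lambda_0}}.$$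
   Context: $\alpha_0=\alpha_1\alpha_2-|\alpha|^2$, $\Omega(\zeta)=\alpha_0+(1-i)\alpha_2\zeta+2i\operatorname{Re}\alpha\,\zeta^2-(1+i)\alpha_1\zeta^3-\zeta^4$. $H$ acts as $u\mapsto u^{(4)}$ on $u\in\mathsf{H}^4(\mathbb{R}_+)$ satisfying the boundary conditions; it is self-adjoint. *)

(* Defs.v *)
From Stdlib Require Import Reals.
From Coquelicot Require Import Coquelicot.
Open Scope R_scope.

Definition alpha0 (a : C) (a1 a2 : R) : C :=
  RtoC (a1 * a2 - (Cmod a) ^ 2).

Definition Omega (a : C) (a1 a2 : R) (z : C) : C :=
  (alpha0 a a1 a2
   + (RtoC 1 - Ci) * RtoC a2 * z
   + RtoC 2 * Ci * RtoC (Re a) * Cpow z 2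
   - (RtoC 1 + Ci) * RtoC a1 * Cpow z 3
   - Cpow z 4)%C.

Definition qrt (lam : R) : R := sqrt (sqrt lam).

Definition s_fun (a : C) (a1 a2 : R) (lam : R) : C :=
  (Cconj (Omega a a1 a2 (RtoC (qrt lam))) / Omega a a1 a2 (RtoC (qrt lam)))%C.

Definition b_fun (a : C) (a1 a2 : R) (lam : R) : C :=
  let k := RtoC (qrt lam) in
  ((alpha0 a a1 a2 + RtoC 2 * Ci * RtoC (Im a) * Cpow k 2 + Cpow k 4)
     / Omega a a1 a2 k)%C.

Definition smooth_pos (f : R -> C) : Prop :=
  forall (n : nat) (x : R), 0 < x ->
    ex_derive_n (fun t => Re (f t)) n x /\ ex_derive_n (fun t => Im (f t)) n x.

(* An eigenfunction u = ur + i ui is represented by its real and imaginary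
   parts on (0,+oo): they have derivatives up to order 4 there, the
   derivatives u^(j), j <= 3, have boundary values u^(j)(0) (limits from the
   right at 0), u^(j) is square integrable on (0,+oo) for j <= 4,
   u'''' = lam u, the boundary conditions hold, and u is not identically 0. *)
Definition is_eigenvalue_H (a : C) (a1 a2 : R) (lam : R) : Prop :=
  exists (ur ui : R -> R) (bv : nat -> C),
    (forall (j : nat) (x : R), (j <= 4)%nat -> 0 < x ->
        ex_derive_n ur j x /\ ex_derive_n ui j x) /\
    (forall j : nat, (j <= 3)%nat ->
        filterlim (Derive_n ur j) (at_right 0) (locally (Re (bv j))) /\
        filterlim (Derive_n ui j) (at_right 0) (locally (Im (bv j)))) /\
    (forall j : nat, (j <= 4)%nat ->
        ex_RInt_gen (fun x => (Derive_n ur j x) ^ 2 + (Derive_n ui j x) ^ 2)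
                    (at_right 0) (Rbar_locally p_infty)) /\
    (forall x : R, 0 < x ->
        Derive_n ur 4 x = lam * ur x /\ Derive_n ui 4 x = lam * ui x) /\
    bv 2%nat = (a * bv 0%nat + RtoC a1 * bv 1%nat)%C /\
    bv 3%nat = (- (RtoC a2 * bv 0%nat) - Cconj a * bv 1%nat)%C /\
    (exists x : R, 0 < x /\ (ur x <> 0 \/ ui x <> 0)).

(* Main.v *)
Require Import Defs.
From Stdlib Require Import Reals.
From Coquelicot Require Import Coquelicot.
Open Scope R_scope.
From Stdlib Require Import Lra Lia Classical.

Definition Ck (n:nat) (f : R -> R) :=
  forall x, 0 < x -> forall k, (k <= n)%nat -> ex_derive_n f k x.

Lemma loc_pos x : 0 < x -> locally x (fun y => 0 < y).
Proof. intros Hx. apply (open_gt 0). exact Hx. Qed.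

Lemma Derive_n_S f k x : Derive_n f (S k) x = Derive_n (Derive f) k x.
Proof.
  change (Derive_n f (S k) x = Derive_n (Derive_n f 1) k x).
  rewrite Derive_n_comp. replace (k+1)%nat with (S k) by lia.
  reflexivity.
Qed.

Lemma Ck_S n f : (forall x, 0 < x -> ex_derive f x) -> Ck n (Derive f) -> Ck (S n) f.
Proof.
  intros H1 H2 x Hx k Hk. destruct k as [|k]. exact I.
  destruct k as [|k]. simpl. apply H1; auto.
  simpl. apply ex_derive_ext with (Derive_n (Derive f) k).
  intros t. symmetry; apply Derive_n_S.
  apply (H2 x Hx (S k)). lia.
Qed.

Lemma Ck_S_inv n f : Ck (S n) f -> (forall x, 0 < x -> ex_derive f x) /\ Ck n (Derive f).
Proof.
  intros H. split.
  - intros x Hx. apply (H x Hx 1%nat). lia.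
  - intros x Hx k Hk. destruct k as [|k]. exact I.
    simpl. apply ex_derive_ext with (Derive_n f (S k)).
    intros t. apply Derive_n_S.
    apply (H x Hx (S (S k))). lia.
Qed.

Lemma Ck_le n m f : (m <= n)%nat -> Ck n f -> Ck m f.
Proof. intros Hm H x Hx k Hk. apply H; auto. lia. Qed.

Lemma Ck_ext n f g : (forall x, 0 < x -> f x = g x) -> Ck n f -> Ck n g.
Proof.
  intros He H x Hx k Hk. apply ex_derive_n_ext_loc with f.
  generalize (loc_pos x Hx). apply filter_imp. intros; apply He; auto.
  apply H; auto.
Qed.

Lemma Ck_loc n f x : 0 < x -> Ck n f ->
  locally x (fun y => forall k, (k <= n)%nat -> ex_derive_n f k y).
Proof. intros Hx H. generalize (loc_pos x Hx). apply filter_imp. intros y Hy k Hk. apply H; auto. Qed.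

Lemma Ck_plus n f g : Ck n f -> Ck n g -> Ck n (fun x => f x + g x).
Proof.
  intros Hf Hg x Hx k Hk. apply ex_derive_n_plus.
  generalize (Ck_loc n f x Hx Hf). apply filter_imp. intros y Hy j Hj. apply Hy; lia.
  generalize (Ck_loc n g x Hx Hg). apply filter_imp. intros y Hy j Hj. apply Hy; lia.
Qed.

Lemma Derive_n_const c k t : Derive_n (fun _ => c) (S k) t = 0.
Proof.
  revert t; induction k; intros t.
  exact (Derive_const c t).
  transitivity (Derive (fun _ => 0) t). apply Derive_ext. exact IHk. apply Derive_const.
Qed.

Lemma Ck_const n c : Ck n (fun _ => c).
Proof.
  intros x Hx k Hk. destruct k. exact I. destruct k. apply ex_derive_const.
  apply ex_derive_ext with (fun _ => 0). intro; symmetry; apply Derive_n_const.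
  apply ex_derive_const.
Qed.

Lemma Ck_mult n : forall f g, Ck n f -> Ck n g -> Ck n (fun x => f x * g x).
Proof.
  induction n; intros f g Hf Hg.
  intros x Hx k Hk. replace k with 0%nat by lia. exact I.
  destruct (Ck_S_inv n f Hf) as [Hf1 Hf2]. destruct (Ck_S_inv n g Hg) as [Hg1 Hg2].
  apply Ck_S. intros; apply ex_derive_mult; auto.
  apply Ck_ext with (fun x => Derive f x * g x + f x * Derive g x).
  intros x Hx. rewrite Derive_mult; auto.
  apply Ck_plus; apply IHn; auto; apply Ck_le with (S n); auto.
Qed.

Lemma Ck_inv n : forall f, Ck n f -> (forall x, 0 < x -> f x <> 0) -> Ck n (fun x => / f x).
Proof.
  induction n; intros f Hf Hnz.
  intros x Hx k Hk. replace k with 0%nat by lia. exact I.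
  destruct (Ck_S_inv n f Hf) as [Hf1 Hf2].
  apply Ck_S. intros; apply ex_derive_inv; auto.
  apply Ck_ext with (fun x => (-1) * Derive f x * ((/ f x) * (/ f x))).
  intros x Hx. rewrite Derive_inv; auto. field. auto.
  apply Ck_mult. apply Ck_mult. apply Ck_const. auto.
  apply Ck_mult; apply IHn; auto; apply Ck_le with (S n); auto.
Qed.


Lemma qrt_pos x : 0 < x -> 0 < qrt x.
Proof. intros. unfold qrt. apply sqrt_lt_R0. apply sqrt_lt_R0. auto. Qed.


Lemma is_derive_qrt x : 0 < x -> is_derive qrt x (/ (4 * (qrt x * (qrt x * qrt x)))).
Proof.
  intros Hx. unfold qrt.
  assert (H1 : 0 < sqrt x) by (apply sqrt_lt_R0; auto).
  assert (H2 : 0 < sqrt (sqrt x)) by (apply sqrt_lt_R0; auto).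
  assert (E : sqrt (sqrt x) * sqrt (sqrt x) = sqrt x) by (apply sqrt_sqrt; lra).
  auto_derive. lra.
  rewrite E. field. lra.
Qed.

Lemma Ck_qrt n : Ck n qrt.
Proof.
  induction n.
  intros x Hx k Hk. replace k with 0%nat by lia. exact I.
  apply Ck_S. intros x Hx. eexists; apply is_derive_qrt; auto.
  apply Ck_ext with (fun x => / (4 * (qrt x * (qrt x * qrt x)))).
  intros x Hx. symmetry. apply is_derive_unique. apply is_derive_qrt; auto.
  apply Ck_inv. apply Ck_mult. apply Ck_const. apply Ck_mult. auto. apply Ck_mult; auto.
  intros x Hx. generalize (qrt_pos x Hx); intros. apply Rgt_not_eq.
  apply Rmult_gt_0_compat. lra. apply Rmult_gt_0_compat; auto. apply Rmult_gt_0_compat; auto.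
Qed.

Fixpoint peval (l : list R) (k : R) : R :=
  match l with nil => 0 | cons c l' => c + k * peval l' k end.

Lemma Ck_peval l n : Ck n (fun x => peval l (qrt x)).
Proof.
  induction l as [|c l IH]. exact (Ck_const n 0).
  simpl. apply Ck_plus. apply Ck_const. apply Ck_mult. apply Ck_qrt. exact IH.
Qed.

Definition Sm f := forall n, Ck n f.
Lemma Sm_plus f g : Sm f -> Sm g -> Sm (fun x => f x + g x).
Proof. intros ? ? n; apply Ck_plus; auto. Qed.
Lemma Sm_mult f g : Sm f -> Sm g -> Sm (fun x => f x * g x).
Proof. intros ? ? n; apply Ck_mult; auto. Qed.
Lemma Sm_const c : Sm (fun _ => c).
Proof. intros n; apply Ck_const. Qed.
Lemma Sm_qrt : Sm (fun x => qrt x).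
Proof. intros n; apply Ck_qrt. Qed.
Lemma Sm_opp f : Sm f -> Sm (fun x => - f x).
Proof. intros H n. apply Ck_ext with (fun x => (-1) * f x). intros; ring.
  apply Ck_mult; auto. apply Ck_const. Qed.
Lemma Sm_minus f g : Sm f -> Sm g -> Sm (fun x => f x - g x).
Proof. intros H1 H2 n. apply Ck_ext with (fun x => f x + - g x). intros; ring.
  apply Sm_plus; auto. apply Sm_opp; auto. Qed.
Lemma Sm_pow f m : Sm f -> Sm (fun x => f x ^ m).
Proof. intros H. induction m. exact (Sm_const 1). simpl. apply Sm_mult; auto. Qed.
Lemma Sm_div f g : Sm f -> Sm g -> (forall x, 0 < x -> g x <> 0) -> Sm (fun x => f x / g x).
Proof. intros H1 H2 H3 n. apply Ck_mult; auto. apply Ck_inv; auto. Qed.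

Ltac smooth_tac := repeat match goal with
  | |- Sm (fun x => ?c) => exact (Sm_const c)
  | |- Sm (fun x => qrt x) => exact Sm_qrt
  | |- Sm qrt => exact Sm_qrt
  | |- Sm (fun x => _ + _) => apply Sm_plus
  | |- Sm (fun x => _ - _) => apply Sm_minus
  | |- Sm (fun x => _ * _) => apply Sm_mult
  | |- Sm (fun x => - _) => apply Sm_opp
  | |- Sm (fun x => _ ^ _) => apply Sm_pow
  end.

Lemma smooth_of (u v : R -> R) : Sm u -> Sm v -> smooth_pos (fun t => (u t, v t)).
Proof. intros Hu Hv n x Hx. split. exact (Hu n x Hx n (le_n n)). exact (Hv n x Hx n (le_n n)). Qed.

Definition mkS (A Bi : R -> R) (lam : R) : C :=
  ((A (qrt lam) * A (qrt lam) - Bi (qrt lam) * Bi (qrt lam)) /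
     (A (qrt lam) * A (qrt lam) + Bi (qrt lam) * Bi (qrt lam)),
   - (2 * A (qrt lam) * Bi (qrt lam)) /
     (A (qrt lam) * A (qrt lam) + Bi (qrt lam) * Bi (qrt lam))).
Definition mkB (A Bi Nr Ni : R -> R) (lam : R) : C :=
  ((Nr (qrt lam) * A (qrt lam) + Ni (qrt lam) * Bi (qrt lam)) /
     (A (qrt lam) * A (qrt lam) + Bi (qrt lam) * Bi (qrt lam)),
   (Ni (qrt lam) * A (qrt lam) - Nr (qrt lam) * Bi (qrt lam)) /
     (A (qrt lam) * A (qrt lam) + Bi (qrt lam) * Bi (qrt lam))).

Lemma smooth_mk (A Bi Nr Ni : R -> R) :
  Sm (fun x => A (qrt x)) -> Sm (fun x => Bi (qrt x)) -> Sm (fun x => Nr (qrt x)) -> Sm (fun x => Ni (qrt x)) ->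
  (forall k, 0 < k -> A k * A k + Bi k * Bi k <> 0) ->
  smooth_pos (mkS A Bi) /\ smooth_pos (mkB A Bi Nr Ni).
Proof.
  intros HA HB HN HI Hd.
  assert (Hd' : forall x, 0 < x -> A (qrt x) * A (qrt x) + Bi (qrt x) * Bi (qrt x) <> 0).
  { intros; apply Hd; apply qrt_pos; auto. }
  split; apply smooth_of; apply Sm_div; auto; smooth_tac; auto.
Qed.

Definition Or p q a1 a2 k := a1 * a2 - (p*p+q*q) + a2 * k - a1 * k^3 - k^4.
Definition Oi p a1 a2 k := - a2 * k + 2*p*k^2 - a1 * k^3.
Definition Nr p q a1 a2 k := a1 * a2 - (p*p+q*q) + k^4.
Definition Ni q k := 2 * q * k^2.
Definition Rr a1 k0 k := - k^3 - (a1+k0) * k^2 - (a1*k0 + k0^2) * k + k0^3.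
Definition Ri a1 k0 k := k * (- a1 * k + 2 * k0^2 + a1 * k0).
Definition Mf k0 k := (k + k0) * (k^2 + k0^2).
Definition Struct p q a1 a2 k := q = 0 /\ p = k^2 + a1*k /\ a2 = 2*k^3 + a1*k^2.

Lemma Cmod2 p q : Cmod (p,q) ^ 2 = p*p+q*q.
Proof. unfold Cmod. rewrite pow2_sqrt; simpl; nra. Qed.

Lemma Omega_real p q a1 a2 k : Omega (p,q) a1 a2 (RtoC k) = (Or p q a1 a2 k, Oi p a1 a2 k).
Proof.
  unfold Omega, alpha0. rewrite Cmod2. unfold Or, Oi.
  apply injective_projections; simpl; ring.
Qed.

Lemma N_real p q a1 a2 k :
  (alpha0 (p,q) a1 a2 + RtoC 2 * Ci * RtoC (Im (p,q)) * Cpow (RtoC k) 2 + Cpow (RtoC k) 4)%C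
  = (Nr p q a1 a2 k, Ni q k).
Proof.
  unfold alpha0. rewrite Cmod2. unfold Nr, Ni.
  apply injective_projections; simpl; ring.
Qed.

Lemma zero_struct p q a1 a2 k : 0 < k -> Or p q a1 a2 k = 0 -> Oi p a1 a2 k = 0 -> Struct p q a1 a2 k.
Proof.
  intros Hk H1 H2. unfold Or, Oi in *.
  assert (Ha2 : a2 = 2*p*k - a1*k^2).
  { assert (E : k * (a2 - (2*p*k - a1*k^2)) = 0).
    { replace (k * (a2 - (2*p*k - a1*k^2))) with (-( - a2 * k + 2*p*k^2 - a1*k^3)) by ring.
      rewrite H2; ring. }
    apply Rmult_integral in E. destruct E; lra. }
  subst a2.
  assert (E : (p - a1*k - k^2)*(p - a1*k - k^2) + q*q = 0).
  { replace ((p - a1*k - k^2)*(p - a1*k - k^2) + q*q) with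
      (-(a1 * (2*p*k - a1*k^2) - (p*p+q*q) + (2*p*k - a1*k^2) * k - a1 * k^3 - k^4)) by ring.
    rewrite H1; ring. }
  assert (S1 : 0 <= (p - a1*k - k^2)*(p - a1*k - k^2)) by apply Rle_0_sqr.
  assert (S2 : 0 <= q*q) by apply Rle_0_sqr.
  assert (q = 0).
  { assert (E3 : q*q = 0) by lra. apply Rmult_integral in E3; destruct E3; auto. }
  subst q.
  assert (p - a1*k - k^2 = 0).
  { assert (E2 : (p - a1*k - k^2)*(p - a1*k - k^2) = 0) by lra.
    apply Rmult_integral in E2; destruct E2; auto. }
  assert (Hp : p = k^2 + a1*k) by lra. subst p.
  unfold Struct. repeat split; ring.
Qed.

Lemma struct_zero p q a1 a2 k : Struct p q a1 a2 k -> Or p q a1 a2 k = 0 /\ Oi p a1 a2 k = 0.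
Proof. intros [H1 [H2 H3]]. subst. unfold Or, Oi. split; ring. Qed.

Lemma struct_unique p q a1 a2 k k0 : 0 < k -> 0 < k0 -> Struct p q a1 a2 k -> Struct p q a1 a2 k0 -> k = k0.
Proof.
  intros Hk Hk0 [_ [H1 H2]] [_ [H3 H4]].
  destruct (Req_dec k k0) as [|Hne]; auto. exfalso.
  assert (Ha1 : a1 = -(k+k0)).
  { apply Rmult_eq_reg_l with (k - k0). nra. lra. }
  subst a1.
  assert ((k-k0)*(k^2+k0^2) = 0) by nra.
  apply Rmult_integral in H. destruct H. lra. nra.
Qed.

Lemma fact_O p q a1 a2 k0 k : Struct p q a1 a2 k0 ->
  Or p q a1 a2 k = (k - k0) * Rr a1 k0 k /\ Oi p a1 a2 k = (k - k0) * Ri a1 k0 k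
  /\ Nr p q a1 a2 k = (k - k0) * Mf k0 k /\ Ni q k = 0.
Proof. intros [H1 [H2 H3]]. subst. unfold Or, Oi, Nr, Ni, Rr, Ri, Mf. repeat split; ring. Qed.

Lemma nz_fact x y z : x <> 0 -> y*y+z*z <> 0 -> x*y*(x*y) + x*z*(x*z) <> 0.
Proof. intros. replace (x*y*(x*y) + x*z*(x*z)) with (x*x*(y*y+z*z)) by ring.
  repeat apply Rmult_integral_contrapositive_currified; auto. Qed.

Lemma sumsq_nz x y : 0 < y*y -> x*x + y*y <> 0.
Proof. intros. assert (0 <= x*x) by apply Rle_0_sqr. lra. Qed.

Lemma sq_pos y : y <> 0 -> 0 < y*y.
Proof. intros. nra. Qed.

Lemma qrt_sq lam : 0 < lam -> qrt lam * qrt lam = sqrt lam.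
Proof. intros. unfold qrt. apply sqrt_sqrt. apply sqrt_pos. Qed.


Lemma ball_R x e y : ball x e y -> Rabs (y - x) < e.
Proof. intros H; exact H. Qed.

Lemma mono f df : (forall x, 0 < x -> is_derive f x (df x)) -> (forall x, 0 < x -> 0 <= df x) ->
  forall x y, 0 < x -> x <= y -> f x <= f y.
Proof.
  intros Hd Hp x y Hx Hxy.
  destruct (MVT_gen f x y df) as [c [Hc E]].
  - intros t Ht. apply Hd. rewrite Rmin_left in Ht by lra. lra.
  - intros t Ht. rewrite Rmin_left in Ht by lra. apply continuity_pt_filterlim.
    apply (ex_derive_continuous f). eexists; apply Hd; lra.
  - rewrite Rmin_left in Hc by lra. assert (0 <= df c) by (apply Hp; lra). nra.
Qed.

Lemma nonint g x0 eps : 0 < x0 -> ex_RInt_gen g (at_right 0) (Rbar_locally p_infty) ->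
  (forall x, x0 <= x -> eps <= g x) -> eps <= 0.
Proof.
  intros Hx0 [l Hl] Hg. apply Rnot_lt_le; intro Heps.
  assert (HB : locally l (ball l (mkposreal 1 Rlt_0_1))) by apply locally_ball.
  specialize (Hl _ HB).
  destruct Hl as [Q R HQ HR HP].
  destruct HQ as [d Hd]. destruct HR as [M HM].
  set (a := d/2).
  assert (Qa : Q a).
  { apply Hd. unfold ball; simpl; unfold AbsRing_ball, abs, minus, plus, opp; simpl.
    unfold a. rewrite Ropp_0, Rplus_0_r, Rabs_pos_eq; generalize (cond_pos d); intros; lra.
    unfold a; generalize (cond_pos d); intros; lra. }
  set (b1 := Rmax (M+1) (Rmax x0 d)).
  assert (Hb1M : M < b1) by (unfold b1; generalize (Rmax_l (M+1) (Rmax x0 d)); lra).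
  assert (Hb1x : x0 <= b1) by (unfold b1; generalize (Rmax_r (M+1) (Rmax x0 d)) (Rmax_l x0 d); lra).
  assert (Hb1d : d <= b1) by (unfold b1; generalize (Rmax_r (M+1) (Rmax x0 d)) (Rmax_r x0 d); lra).
  set (b2 := b1 + 3/eps).
  assert (H3 : 0 < 3/eps) by (apply Rdiv_lt_0_compat; lra).
  destruct (HP a b1 Qa (HM b1 Hb1M)) as [y1 [I1 B1]].
  destruct (HP a b2 Qa (HM b2 ltac:(unfold b2; lra))) as [y2 [I2 B2]].
  simpl in I1, I2. apply ball_R in B1. apply ball_R in B2. simpl in B1, B2.
  assert (Ha : 0 < a) by (unfold a; generalize (cond_pos d); intros; lra).
  assert (Ex : ex_RInt g b1 b2).
  { refine (@ex_RInt_Chasles_2 R_CompleteNormedModule g a b1 b2 _ _).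
    split; [unfold a; generalize (cond_pos d); intros; lra | unfold b2; lra].
    exists y2; exact I2. }
  destruct Ex as [z Iz].
  assert (I3 := is_RInt_Chasles g a b1 b2 y1 z I1 Iz).
  assert (E : y2 = plus y1 z).
  { pose proof (@is_RInt_unique R_CompleteNormedModule g a b2 y2 I2) as U1.
    pose proof (@is_RInt_unique R_CompleteNormedModule g a b2 _ I3) as U2. congruence. }
  assert (Hz : (b2 - b1) * eps <= z).
  { apply (is_RInt_le (fun _ => eps) g b1 b2). unfold b2; lra.
    apply (is_RInt_const b1 b2 eps). auto.
    intros t Ht. apply Hg. lra. }
  unfold plus in E; simpl in E. unfold b2 in Hz.
  replace ((b1 + 3 / eps - b1) * eps) with 3 in Hz by (field; lra).
  apply Rabs_lt_between in B1. apply Rabs_lt_between in B2. lra.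
Qed.

Lemma int_lin f g c : ex_RInt_gen f (at_right 0) (Rbar_locally p_infty) ->
  ex_RInt_gen g (at_right 0) (Rbar_locally p_infty) ->
  ex_RInt_gen (fun x => c * f x + g x) (at_right 0) (Rbar_locally p_infty).
Proof.
  intros [lf Hf] [lg Hg]. exists (plus (scal c lf) lg).
  apply (is_RInt_gen_plus (fun y => scal c (f y)) g).
  apply is_RInt_gen_scal; auto. auto.
Qed.

Lemma sq2 a b : (a+b)*(a+b) <= 2*(a*a+b*b).
Proof. assert (0 <= (a-b)*(a-b)) by apply Rle_0_sqr. lra. Qed.
Lemma sq4 a b c d : (a+b+c+d)*(a+b+c+d) <= 4*(a*a+b*b+c*c+d*d).
Proof.
  assert (0 <= (a-b)*(a-b)) by apply Rle_0_sqr. assert (0 <= (a-c)*(a-c)) by apply Rle_0_sqr.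
  assert (0 <= (a-d)*(a-d)) by apply Rle_0_sqr. assert (0 <= (b-c)*(b-c)) by apply Rle_0_sqr.
  assert (0 <= (b-d)*(b-d)) by apply Rle_0_sqr. assert (0 <= (c-d)*(c-d)) by apply Rle_0_sqr.
  lra. Qed.
Lemma sq_nonneg a : 0 <= a*a.
Proof. apply Rle_0_sqr. Qed.
Lemma sumsq0 a b : a*a + b*b <= 0 -> a = 0 /\ b = 0.
Proof. intros H. generalize (sq_nonneg a) (sq_nonneg b); intros.
  assert (a*a = 0) by lra. assert (b*b = 0) by lra.
  split; [apply Rmult_integral in H2|apply Rmult_integral in H3]; intuition. Qed.

Lemma is_derive_eq (f : R -> R) x l l' : is_derive f x l -> l = l' -> is_derive f x l'.
Proof. intros; subst; auto. Qed.

Lemma sq_pos' a : a <> 0 -> 0 < a * a.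
Proof. intros. nra. Qed.

Lemma int_scal f c : ex_RInt_gen f (at_right 0) (Rbar_locally p_infty) ->
  ex_RInt_gen (fun x => c * f x) (at_right 0) (Rbar_locally p_infty).
Proof. intros [l H]. exists (scal c l). apply (is_RInt_gen_scal f c l H). Qed.

Ltac exsolve F G EF EG x Hx := repeat match goal with
    | |- _ /\ _ => split
    | |- ex_derive (fun _ => F ?j _) _ => exact (EF j x ltac:(lia) Hx)
    | |- ex_derive (fun _ => G ?j _) _ => exact (EG j x ltac:(lia) Hx)
    | |- True => exact I end.
Ltac drew DF DG x Hx := rewrite ?(DF 0%nat x), ?(DF 1%nat x), ?(DF 2%nat x), ?(DF 3%nat x),
    ?(DG 0%nat x), ?(DG 1%nat x), ?(DG 2%nat x), ?(DG 3%nat x) by first [lia | exact Hx].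

Lemma eig_core (F G : nat -> R -> R) (X Y : nat -> R) k :
 0 < k ->
 (forall j x, (j <= 3)%nat -> 0 < x -> is_derive (F j) x (F (S j) x) /\ is_derive (G j) x (G (S j) x)) ->
 (forall x, 0 < x -> F 4%nat x = k^4 * F 0%nat x /\ G 4%nat x = k^4 * G 0%nat x) ->
 (forall j, (j <= 4)%nat -> ex_RInt_gen (fun x => F j x ^ 2 + G j x ^ 2) (at_right 0) (Rbar_locally p_infty)) ->
 (forall j, (j <= 3)%nat -> filterlim (F j) (at_right 0) (locally (X j)) /\ filterlim (G j) (at_right 0) (locally (Y j))) ->
 (exists x, 0 < x /\ (F 0%nat x <> 0 \/ G 0%nat x <> 0)) ->
 (X 1%nat = -k * X 0%nat /\ Y 1%nat = -k * Y 0%nat /\ X 2%nat = k^2 * X 0%nat /\ Y 2%nat = k^2 * Y 0%nat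
   /\ X 3%nat = -k^3 * X 0%nat /\ Y 3%nat = -k^3 * Y 0%nat) /\ (X 0%nat <> 0 \/ Y 0%nat <> 0).
Proof.
  intros Hk Hd H4 Hi Hl Hn.
  assert (DF : forall j x, (j <= 3)%nat -> 0 < x -> Derive (fun y => F j y) x = F (S j) x).
  { intros j x Hj Hx. apply is_derive_unique. exact (proj1 (Hd j x Hj Hx)). }
  assert (DG : forall j x, (j <= 3)%nat -> 0 < x -> Derive (fun y => G j y) x = G (S j) x).
  { intros j x Hj Hx. apply is_derive_unique. exact (proj2 (Hd j x Hj Hx)). }
  assert (EF : forall j x, (j <= 3)%nat -> 0 < x -> ex_derive (fun y => F j y) x).
  { intros j x Hj Hx. exists (F (S j) x). exact (proj1 (Hd j x Hj Hx)). }
  assert (EG : forall j x, (j <= 3)%nat -> 0 < x -> ex_derive (fun y => G j y) x).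
  { intros j x Hj Hx. exists (G (S j) x). exact (proj2 (Hd j x Hj Hx)). }
  pose (Ij := fun j x => F j x ^ 2 + G j x ^ 2).
  assert (W0 : forall x0, 0 < x0 ->
     F 3%nat x0 + k*F 2%nat x0 + k^2*F 1%nat x0 + k^3*F 0%nat x0 = 0 /\
     G 3%nat x0 + k*G 2%nat x0 + k^2*G 1%nat x0 + k^3*G 0%nat x0 = 0).
  { intros x0 Hx0.
    pose (W := fun y => (F 3%nat y + k*F 2%nat y + k^2*F 1%nat y + k^3*F 0%nat y) *
                       (F 3%nat y + k*F 2%nat y + k^2*F 1%nat y + k^3*F 0%nat y) +
                       (G 3%nat y + k*G 2%nat y + k^2*G 1%nat y + k^3*G 0%nat y) *
                       (G 3%nat y + k*G 2%nat y + k^2*G 1%nat y + k^3*G 0%nat y)).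
    assert (dW : forall x, 0 < x -> is_derive W x (2 * k * W x)).
    { intros x Hx. unfold W. destruct (H4 x Hx) as [A B].
      eapply is_derive_eq. auto_derive.
      exsolve F G EF EG x Hx. reflexivity.
      drew DF DG x Hx.
      rewrite A, B. lazymatch goal with |- ?a = ?b => change (@eq R a b) end. ring. }
    assert (Wp : forall x, 0 <= W x).
    { intros x. unfold W. generalize (sq_nonneg (F 3%nat x + k*F 2%nat x + k^2*F 1%nat x + k^3*F 0%nat x))
        (sq_nonneg (G 3%nat x + k*G 2%nat x + k^2*G 1%nat x + k^3*G 0%nat x)). lra. }
    assert (M := mono W (fun x => 2 * k * W x) dW).
    assert (Hint : ex_RInt_gen (fun x => 4 * Ij 3%nat x + (4*k^2 * Ij 2%nat x + (4*k^4 * Ij 1%nat x + 4*k^6 * Ij 0%nat x)))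
                      (at_right 0) (Rbar_locally p_infty)).
    { unfold Ij. apply int_lin. apply Hi; lia. apply int_lin. apply Hi; lia.
      apply int_lin. apply Hi; lia. apply int_scal. apply Hi; lia. }
    assert (Hle := nonint _ x0 (W x0) Hx0 Hint).
    assert (HW : W x0 <= 0).
    { apply Hle. intros x Hx. apply Rle_trans with (W x).
      apply M; auto. intros; apply Rmult_le_pos; [lra| apply Wp].
      unfold W, Ij. cbv beta.
      generalize (sq4 (F 3%nat x) (k*F 2%nat x) (k^2*F 1%nat x) (k^3*F 0%nat x))
                 (sq4 (G 3%nat x) (k*G 2%nat x) (k^2*G 1%nat x) (k^3*G 0%nat x)). intros Q1 Q2.
      apply Rle_trans with (4*(F 3%nat x*F 3%nat x + (k*F 2%nat x)*(k*F 2%nat x) + (k^2*F 1%nat x)*(k^2*F 1%nat x) + (k^3*F 0%nat x)*(k^3*F 0%nat x))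
        + 4*(G 3%nat x*G 3%nat x + (k*G 2%nat x)*(k*G 2%nat x) + (k^2*G 1%nat x)*(k^2*G 1%nat x) + (k^3*G 0%nat x)*(k^3*G 0%nat x))).
      lra. right. ring. }
    apply sumsq0. exact HW. }
  assert (V0 : forall x0, 0 < x0 -> F 1%nat x0 + k*F 0%nat x0 = 0 /\ G 1%nat x0 + k*G 0%nat x0 = 0).
  { intros x0 Hx0.
    pose (E := fun y => k^2*((F 1%nat y + k*F 0%nat y)*(F 1%nat y + k*F 0%nat y) + (G 1%nat y + k*G 0%nat y)*(G 1%nat y + k*G 0%nat y))
       + ((F 2%nat y + k*F 1%nat y)*(F 2%nat y + k*F 1%nat y) + (G 2%nat y + k*G 1%nat y)*(G 2%nat y + k*G 1%nat y))).
    assert (dE : forall x, 0 < x -> is_derive E x 0).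
    { intros x Hx. unfold E. destruct (W0 x Hx) as [A B].
      eapply is_derive_eq. auto_derive.
      exsolve F G EF EG x Hx. reflexivity.
      drew DF DG x Hx.
      lazymatch goal with |- ?a = ?b => change (@eq R a b) end.
      transitivity (2*(F 2%nat x + k*F 1%nat x)*(F 3%nat x + k*F 2%nat x + k^2*F 1%nat x + k^3*F 0%nat x)
                  + 2*(G 2%nat x + k*G 1%nat x)*(G 3%nat x + k*G 2%nat x + k^2*G 1%nat x + k^3*G 0%nat x)).
      ring. rewrite A, B. ring. }
    assert (M := mono E (fun _ => 0) dE (fun _ _ => Rle_refl 0)).
    assert (Hint : ex_RInt_gen (fun x => 2*k^4 * Ij 0%nat x + (4*k^2 * Ij 1%nat x + 2 * Ij 2%nat x))
                      (at_right 0) (Rbar_locally p_infty)).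
    { unfold Ij. apply int_lin. apply Hi; lia. apply int_lin. apply Hi; lia.
      apply int_scal. apply Hi; lia. }
    assert (Hle := nonint _ x0 (E x0) Hx0 Hint).
    assert (HE : E x0 <= 0).
    { apply Hle. intros x Hx. apply Rle_trans with (E x).
      apply M; auto.
      unfold E, Ij. cbv beta.
      assert (k2 : 0 <= k^2) by nra.
      assert (Q1 : k^2*((F 1%nat x + k*F 0%nat x)*(F 1%nat x + k*F 0%nat x)) <= k^2*(2*(F 1%nat x*F 1%nat x + (k*F 0%nat x)*(k*F 0%nat x))))
        by (apply Rmult_le_compat_l; [auto|apply sq2]).
      assert (Q2 : k^2*((G 1%nat x + k*G 0%nat x)*(G 1%nat x + k*G 0%nat x)) <= k^2*(2*(G 1%nat x*G 1%nat x + (k*G 0%nat x)*(k*G 0%nat x))))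
        by (apply Rmult_le_compat_l; [auto|apply sq2]).
      generalize (sq2 (F 2%nat x) (k*F 1%nat x)) (sq2 (G 2%nat x) (k*G 1%nat x)). intros Q3 Q4.
      apply Rle_trans with (k^2*(2*(F 1%nat x*F 1%nat x + (k*F 0%nat x)*(k*F 0%nat x))) + k^2*(2*(G 1%nat x*G 1%nat x + (k*G 0%nat x)*(k*G 0%nat x)))
         + 2*(F 2%nat x*F 2%nat x + (k*F 1%nat x)*(k*F 1%nat x)) + 2*(G 2%nat x*G 2%nat x + (k*G 1%nat x)*(k*G 1%nat x))).
      assert (Eq : k ^ 2 * ((F 1%nat x + k * F 0%nat x) * (F 1%nat x + k * F 0%nat x) + (G 1%nat x + k * G 0%nat x) * (G 1%nat x + k * G 0%nat x))
         = k^2*((F 1%nat x + k*F 0%nat x)*(F 1%nat x + k*F 0%nat x)) + k^2*((G 1%nat x + k*G 0%nat x)*(G 1%nat x + k*G 0%nat x))) by ring.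
      rewrite Eq. lra. right. ring. }
    unfold E in HE.
    assert (P1 := sq_nonneg (F 2%nat x0 + k * F 1%nat x0)). assert (P2 := sq_nonneg (G 2%nat x0 + k * G 1%nat x0)).
    assert (P3 := sq_nonneg (F 1%nat x0 + k * F 0%nat x0)). assert (P4 := sq_nonneg (G 1%nat x0 + k * G 0%nat x0)).
    assert (k2 : 0 < k^2) by (apply pow_lt; auto).
    apply sumsq0.
    apply Rmult_le_reg_l with (k^2); auto. rewrite Rmult_0_r. lra. }
  assert (SR : forall (f g : R -> R) c x df dg, 0 < x -> (forall y, 0 < y -> f y = c * g y) ->
     is_derive f x df -> is_derive g x dg -> df = c * dg).
  { intros f g c x df dg Hx Hfg Hf Hg.
    assert (H1 : is_derive f x (c * dg)).
    { apply is_derive_ext_loc with (fun y => c * g y).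
      generalize (open_gt 0 x Hx). apply filter_imp. intros y Hy. symmetry; apply Hfg; auto.
      apply is_derive_scal; auto. }
    apply is_derive_unique in Hf. apply is_derive_unique in H1. congruence. }
  assert (R1F : forall x, 0 < x -> F 1%nat x = -k * F 0%nat x) by (intros x Hx; destruct (V0 x Hx); lra).
  assert (R1G : forall x, 0 < x -> G 1%nat x = -k * G 0%nat x) by (intros x Hx; destruct (V0 x Hx); lra).
  assert (R2F : forall x, 0 < x -> F 2%nat x = k^2 * F 0%nat x).
  { intros x Hx. rewrite (SR (F 1%nat) (F 0%nat) (-k) x (F 2%nat x) (F 1%nat x) Hx R1F); try apply Hd; auto; try lia.
    rewrite R1F; auto; ring. }
  assert (R2G : forall x, 0 < x -> G 2%nat x = k^2 * G 0%nat x).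
  { intros x Hx. rewrite (SR (G 1%nat) (G 0%nat) (-k) x (G 2%nat x) (G 1%nat x) Hx R1G); try apply Hd; auto; try lia.
    rewrite R1G; auto; ring. }
  assert (R3F : forall x, 0 < x -> F 3%nat x = -k^3 * F 0%nat x).
  { intros x Hx. rewrite (SR (F 2%nat) (F 0%nat) (k^2) x (F 3%nat x) (F 1%nat x) Hx R2F); try apply Hd; auto; try lia.
    rewrite R1F; auto; ring. }
  assert (R3G : forall x, 0 < x -> G 3%nat x = -k^3 * G 0%nat x).
  { intros x Hx. rewrite (SR (G 2%nat) (G 0%nat) (k^2) x (G 3%nat x) (G 1%nat x) Hx R2G); try apply Hd; auto; try lia.
    rewrite R1G; auto; ring. }
  assert (LR : forall (f g : R -> R) c a b, (forall y, 0 < y -> f y = c * g y) ->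
     filterlim f (at_right 0) (locally a) -> filterlim g (at_right 0) (locally b) -> a = c * b).
  { intros f g c a b Hfg Hf Hg.
    assert (H1 : filterlim (fun y => c * g y) (at_right 0) (locally (c * b))).
    { apply (filterlim_comp _ _ _ g (fun z => scal c z) _ _ _ Hg (filterlim_scal_r c b)). }
    assert (H2 : filterlim f (at_right 0) (locally (c * b))).
    { apply filterlim_ext_loc with (fun y => c * g y); auto.
      exists (mkposreal 1 Rlt_0_1). intros y _ Hy. symmetry; apply Hfg; auto. }
    apply (filterlim_locally_unique f a (c*b) Hf H2). }
  assert (L0 := Hl 0%nat ltac:(lia)). assert (L1 := Hl 1%nat ltac:(lia)).
  assert (L2 := Hl 2%nat ltac:(lia)). assert (L3 := Hl 3%nat ltac:(lia)).
  split.
  { repeat split.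
    - apply (LR (F 1%nat) (F 0%nat)); auto; tauto.
    - apply (LR (G 1%nat) (G 0%nat)); auto; tauto.
    - apply (LR (F 2%nat) (F 0%nat)); auto; tauto.
    - apply (LR (G 2%nat) (G 0%nat)); auto; tauto.
    - apply (LR (F 3%nat) (F 0%nat)); auto; tauto.
    - apply (LR (G 3%nat) (G 0%nat)); auto; tauto. }
  destruct Hn as [x1 [Hx1 Hnz]].
  assert (U1 : 0 < F 0%nat x1 * F 0%nat x1 + G 0%nat x1 * G 0%nat x1).
  { assert (P1 := sq_nonneg (F 0%nat x1)). assert (P2 := sq_nonneg (G 0%nat x1)).
    destruct Hnz as [N|N]; [assert (0 < F 0%nat x1 * F 0%nat x1) by (apply sq_pos'; auto)
                            |assert (0 < G 0%nat x1 * G 0%nat x1) by (apply sq_pos'; auto)]; lra. }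
  pose (U := fun y => - (F 0%nat y * F 0%nat y + G 0%nat y * G 0%nat y)).
  assert (dU : forall x, 0 < x -> is_derive U x (2*k*(F 0%nat x * F 0%nat x + G 0%nat x * G 0%nat x))).
  { intros x Hx. unfold U.
    eapply is_derive_eq. auto_derive.
    exsolve F G EF EG x Hx. reflexivity.
    drew DF DG x Hx.
    lazymatch goal with |- ?a = ?b => change (@eq R a b) end.
    rewrite R1F, R1G; auto. ring. }
  assert (M := mono U _ dU).
  assert (Mp : forall y, 0 < y -> y <= x1 -> F 0%nat x1 * F 0%nat x1 + G 0%nat x1 * G 0%nat x1 <= F 0%nat y * F 0%nat y + G 0%nat y * G 0%nat y).
  { intros y Hy Hyx.
    assert (Up : forall x, 0 < x -> 0 <= 2*k*(F 0%nat x * F 0%nat x + G 0%nat x * G 0%nat x)).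
    { intros x Hx. apply Rmult_le_pos. lra. apply Rplus_le_le_0_compat; apply sq_nonneg. }
    assert (H := M Up y x1 Hy Hyx). unfold U in H. lra. }
  destruct (Req_dec (X 0%nat) 0) as [HX|HX]; [|left; auto].
  destruct (Req_dec (Y 0%nat) 0) as [HY|HY]; [|right; auto].
  exfalso.
  set (u := F 0%nat x1 * F 0%nat x1 + G 0%nat x1 * G 0%nat x1) in *.
  set (e := Rmin 1 (u/4)).
  assert (He : 0 < e) by (unfold e; apply Rmin_pos; lra).
  destruct L0 as [LF LG]. rewrite HX in LF. rewrite HY in LG.
  apply filterlim_locally with (eps := mkposreal e He) in LF.
  apply filterlim_locally with (eps := mkposreal e He) in LG.
  assert (Hpos : at_right 0 (fun y => 0 < y /\ y < x1)).
  { exists (mkposreal x1 Hx1). intros y Hb Hy. split; auto. apply ball_R in Hb. simpl in Hb.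
    apply Rabs_lt_between in Hb. lra. }
  destruct (Hierarchy.filter_ex _ (filter_and _ _ Hpos (filter_and _ _ LF LG))) as [y [[Hy1 Hy2] [B1 B2]]].
  apply ball_R in B1. apply ball_R in B2. simpl in B1, B2. rewrite Rminus_0_r in B1, B2.
  assert (Hm := Mp y Hy1 (Rlt_le _ _ Hy2)).
  assert (e1 : e <= 1) by (unfold e; apply Rmin_l). assert (e2 : e <= u/4) by (unfold e; apply Rmin_r).
  assert (A1 : F 0%nat y * F 0%nat y < e * e).
  { rewrite <- (Rabs_pos_eq (F 0%nat y * F 0%nat y)) by apply sq_nonneg. rewrite Rabs_mult.
    apply Rmult_le_0_lt_compat; auto using Rabs_pos. }
  assert (A2 : G 0%nat y * G 0%nat y < e * e).
  { rewrite <- (Rabs_pos_eq (G 0%nat y * G 0%nat y)) by apply sq_nonneg. rewrite Rabs_mult.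
    apply Rmult_le_0_lt_compat; auto using Rabs_pos. }
  assert (A3 : e * e <= 1 * e) by (apply Rmult_le_compat_r; lra).
  lra.
Qed.

Lemma qrt4 lam : 0 < lam -> qrt lam ^ 4 = lam.
Proof. intros. replace (qrt lam ^ 4) with ((qrt lam * qrt lam) * (qrt lam * qrt lam)) by ring.
  rewrite qrt_sq; auto. apply sqrt_sqrt. lra. Qed.

Lemma eig_struct' p q a1 a2 lam : 0 < lam -> is_eigenvalue_H (p,q) a1 a2 lam -> Struct p q a1 a2 (qrt lam).
Proof.
  intros Hl [ur [ui [bv [H1 [H2 [H3 [H4 [H5 [H6 H7]]]]]]]]].
  assert (Hk : 0 < qrt lam) by (apply qrt_pos; auto).
  set (k := qrt lam) in *.
  assert (C := eig_core (Derive_n ur) (Derive_n ui) (fun j => Re (bv j)) (fun j => Im (bv j)) k Hk).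
  destruct C as [[R1 [I1 [R2 [I2 [R3 I3]]]]] Hnz].
  - intros j x Hj Hx. destruct (H1 (S j) x ltac:(lia) Hx) as [E1 E2].
    split; [exact (Derive_correct _ _ E1) | exact (Derive_correct _ _ E2)].
  - intros x Hx. destruct (H4 x Hx) as [A B]. unfold k. rewrite qrt4; auto.
  - exact H3.
  - exact H2.
  - exact H7.
  - generalize (f_equal fst H5) (f_equal snd H5) (f_equal fst H6) (f_equal snd H6).
    clear H5 H6.
    destruct (bv 0%nat) as [x y]. destruct (bv 1%nat) as [x1 y1].
    destruct (bv 2%nat) as [x2 y2]. destruct (bv 3%nat) as [x3 y3].
    unfold Re, Im in *. simpl in *. subst x1 y1 x2 y2 x3 y3.
    intros E1 E2 E3 E4.
    set (A := p - k*k - a1*k).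
    assert (F1 : A * x - q * y = 0) by (unfold A; lra).
    assert (F2 : A * y + q * x = 0) by (unfold A; lra).
    assert (G1 : (A*A + q*q) * x = 0).
    { replace ((A*A + q*q) * x) with (A*(A * x - q * y) + q*(A * y + q * x)) by ring. rewrite F1, F2; ring. }
    assert (G2 : (A*A + q*q) * y = 0).
    { replace ((A*A + q*q) * y) with (A*(A * y + q * x) - q*(A * x - q * y)) by ring. rewrite F1, F2; ring. }
    assert (G : A*A + q*q = 0).
    { destruct Hnz as [N|N]; [apply Rmult_integral in G1|apply Rmult_integral in G2]; intuition. }
    destruct (sumsq0 A q ltac:(lra)) as [HA Hq]. subst q. unfold A in HA.
    assert (F3 : (a2 - k*k*k - p*k) * x = 0) by lra.
    assert (F4 : (a2 - k*k*k - p*k) * y = 0) by lra.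
    assert (HB : a2 - k*k*k - p*k = 0).
    { destruct Hnz as [N|N]; [apply Rmult_integral in F3|apply Rmult_integral in F4]; intuition. }
    unfold Struct. split; [reflexivity|]. split.
    + lra.
    + assert (Hp : p = k*k + a1*k) by lra. subst p. lra.
Qed.

Lemma cont_at_right (f : R -> R) l : ex_derive f 0 -> f 0 = l -> filterlim f (at_right 0) (locally l).
Proof.
  intros Hd Hl. subst l. eapply filterlim_filter_le_1.
  apply filter_le_within. apply (ex_derive_continuous f). exact Hd.
Qed.

Lemma lim_exp_inf c k : 0 < k -> filterlim (fun x => c * exp (- k * x)) (Rbar_locally p_infty) (locally 0).
Proof.
  intros Hk.
  assert (H1 : filterlim (fun x => - k * x) (Rbar_locally p_infty) (Rbar_locally m_infty)).
  { intros P [M HM]. exists (- M / k). intros x Hx. apply HM.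
    apply Rmult_lt_compat_l with (r := k) in Hx; auto.
    replace (k * (- M / k)) with (- M) in Hx by (field; lra). lra. }
  assert (H2 : filterlim exp (Rbar_locally m_infty) (locally 0)) by exact is_lim_exp_m.
  assert (H3 := filterlim_comp _ _ _ _ _ _ _ _ H1 H2).
  assert (H4 := filterlim_comp _ _ _ _ (fun z => scal c z) _ _ _ H3 (filterlim_scal_r c 0)).
  unfold scal in H4; simpl in H4; unfold mult in H4; simpl in H4. rewrite Rmult_0_r in H4. exact H4.
Qed.

Lemma struct_eig' p q a1 a2 lam : 0 < lam -> Struct p q a1 a2 (qrt lam) -> is_eigenvalue_H (p,q) a1 a2 lam.
Proof.
  intros Hl Hs.
  assert (Hk : 0 < qrt lam) by (apply qrt_pos; auto).
  assert (L4 := qrt4 lam Hl).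
  set (k := qrt lam) in *.
  pose (ur := fun x => exp (- k * x)).
  assert (Dn : forall j x, Derive_n ur j x = (-k)^j * exp (- k * x)).
  { induction j; intros x. simpl. unfold ur. ring.
    simpl. rewrite (Derive_ext _ (fun y => (-k)^j * exp (- k * y)) x IHj).
    apply is_derive_unique. auto_derive; auto. ring. }
  assert (Dn0 : forall j x, Derive_n (fun _ => 0) j x = 0).
  { intros [|j] x. reflexivity. apply Derive_n_const. }
  exists ur, (fun _ => 0), (fun j => RtoC ((-k)^j)).
  split; [|split; [|split; [|split; [|split; [|split]]]]].
  - intros j x Hj Hx. split.
    + destruct j. exact I. simpl. apply ex_derive_ext with (fun y => (-k)^j * exp (- k * y)).
      intros t; symmetry; apply Dn. auto_derive; auto.
    + exact (Ck_const 4 0 x Hx j Hj).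
  - intros j Hj. split.
    + apply filterlim_ext with (fun y => (-k)^j * exp (- k * y)). intros t; symmetry; apply Dn.
      apply cont_at_right. auto_derive; auto. simpl. rewrite Rmult_0_r, exp_0. ring.
    + apply filterlim_ext with (fun _ => 0). intros t; symmetry; apply Dn0. apply filterlim_const.
  - intros j Hj.
    set (c := ((-k)^j)^2).
    pose (f := fun x => - c / (2*k) * exp (- (2*k) * x)).
    assert (Df : forall x, is_derive f x (c * exp (- (2*k) * x))).
    { intros x. unfold f. auto_derive; auto. field. lra. }
    apply ex_RInt_gen_ext_eq with (Derive f).
    { intros x. lazymatch goal with |- ?a = ?b => change (@eq R a b) end. rewrite Dn, Dn0. rewrite (is_derive_unique _ _ _ (Df x)). unfold c.
      replace (exp (- (2*k) * x)) with (exp (- k * x) * exp (- k * x)). ring.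
      rewrite <- exp_plus. f_equal. ring. }
    eexists. apply is_RInt_gen_Derive with (la := f 0) (lb := 0).
    + apply filter_forall. intros ab x _. eexists. apply Df.
    + apply filter_forall. intros ab x _.
      apply continuous_ext with (fun y => c * exp (- (2*k) * y)).
      intros t. symmetry. apply is_derive_unique. apply Df.
      apply (ex_derive_continuous (fun y => c * exp (- (2*k) * y))). auto_derive; auto.
    + apply cont_at_right. eexists; apply Df. reflexivity.
    + unfold f. apply lim_exp_inf. lra.
  - intros x Hx. split. rewrite Dn. unfold ur. rewrite <- L4. lazymatch goal with |- ?a = ?b => change (@eq R a b) end. ring. rewrite Dn0. ring.
  - destruct Hs as [Hq [Hp Ha]]. subst q p. apply injective_projections; simpl; ring.
  - destruct Hs as [Hq [Hp Ha]]. subst q p a2. apply injective_projections; simpl; ring.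
  - exists 1. split. lra. left. unfold ur. apply Rgt_not_eq. apply exp_pos.
Qed.

Lemma eig_struct p q a1 a2 lam : 0 < lam -> is_eigenvalue_H (p,q) a1 a2 lam -> Struct p q a1 a2 (qrt lam).
Proof. apply eig_struct'. Qed.
Lemma struct_eig p q a1 a2 lam : 0 < lam -> Struct p q a1 a2 (qrt lam) -> is_eigenvalue_H (p,q) a1 a2 lam.
Proof. apply struct_eig'. Qed.

Theorem proposition5p10 (a : C) (a1 a2 : R) :
  (forall lam : R, 0 < lam -> ~ is_eigenvalue_H a a1 a2 lam ->
      Omega a a1 a2 (RtoC (qrt lam)) <> RtoC 0) /\
  exists S B : R -> C,
    (forall lam : R, 0 < lam -> Omega a a1 a2 (RtoC (qrt lam)) <> RtoC 0 ->
        S lam = s_fun a a1 a2 lam /\ B lam = b_fun a a1 a2 lam) /\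
    smooth_pos S /\ smooth_pos B /\
    (forall lam0 : R, 0 < lam0 -> is_eigenvalue_H a a1 a2 lam0 ->
        S lam0 = ((a + Ci * RtoC (sqrt lam0)) / (a - Ci * RtoC (sqrt lam0)))%C /\
        B lam0 = (- (RtoC 2 * RtoC (sqrt lam0)) / (a - Ci * RtoC (sqrt lam0)))%C).
Proof.
  destruct a as [p q].
  assert (OZ : forall k, 0 < k -> Omega (p,q) a1 a2 (RtoC k) = RtoC 0 -> Struct p q a1 a2 k).
  { intros k Hk H. rewrite Omega_real in H. injection H; intros. apply zero_struct; auto. }
  split.
  { intros lam Hl Hne HO. apply Hne. apply struct_eig; auto. apply OZ; auto. apply qrt_pos; auto. }
  destruct (classic (exists k0, 0 < k0 /\ Struct p q a1 a2 k0)) as [[k0 [Hk0 Hs]] | Hno].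
  -
    assert (Hd : forall k, 0 < k -> Rr a1 k0 k * Rr a1 k0 k + Ri a1 k0 k * Ri a1 k0 k <> 0).
    { intros k Hk Hz.
      assert (Z1 : Rr a1 k0 k = 0) by nra. assert (Z2 : Ri a1 k0 k = 0) by nra.
      destruct (Req_dec k k0) as [->|Hne].
      - unfold Ri in Z2. replace (k0 * (- a1 * k0 + 2 * k0^2 + a1 * k0)) with (2*(k0*k0*k0)) in Z2 by ring.
        assert (0 < k0*k0*k0) by (repeat apply Rmult_lt_0_compat; auto). lra.
      - destruct (fact_O p q a1 a2 k0 k Hs) as [F1 [F2 _]].
        apply Hne. apply (struct_unique p q a1 a2 k k0); auto.
        apply zero_struct; auto. rewrite F1, Z1; ring. rewrite F2, Z2; ring. }
    exists (mkS (Rr a1 k0) (Ri a1 k0)), (mkB (Rr a1 k0) (Ri a1 k0) (Mf k0) (fun _ => 0)).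
    assert (SM : smooth_pos (mkS (Rr a1 k0) (Ri a1 k0)) /\ smooth_pos (mkB (Rr a1 k0) (Ri a1 k0) (Mf k0) (fun _ => 0))).
    { apply smooth_mk; auto; unfold Rr, Ri, Mf; smooth_tac. }
    destruct SM as [SS SB].
    split; [|split; [auto|split; [auto|]]].
    + intros lam Hl HO. set (k := qrt lam) in *. assert (Hk : 0 < k) by (apply qrt_pos; auto).
      assert (Hne : k <> k0).
      { intros E. apply HO. rewrite Omega_real. destruct (struct_zero p q a1 a2 k0 Hs). subst k. rewrite E, H, H0. reflexivity. }
      assert (Hk' : k - k0 <> 0) by lra.
      generalize (Hd k Hk); intros Hdk.
      destruct (fact_O p q a1 a2 k0 k Hs) as [F1 [F2 [F3 F4]]].
      unfold s_fun, b_fun, mkS, mkB. fold k. rewrite N_real, Omega_real, F1, F2, F3, F4.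
      split; apply injective_projections; simpl; field; repeat split; try apply nz_fact; auto.
    + intros lam0 Hl0 He. generalize (eig_struct p q a1 a2 lam0 Hl0 He); intros Hs0.
      assert (E : qrt lam0 = k0) by (apply (struct_unique p q a1 a2); auto; apply qrt_pos; auto).
      rewrite <- (qrt_sq lam0 Hl0). unfold mkS, mkB. rewrite E.
      generalize (Hd k0 Hk0). destruct Hs as [Hq [Hp Ha2]]. subst q p. unfold Rr, Ri, Mf. simpl. intros Hd0.
      assert (Hy : 0 < k0*k0) by nra.
      split; apply injective_projections; simpl; field; split; auto; apply sumsq_nz; apply sq_pos; first [lra | apply Rmult_integral_contrapositive_currified; lra].
  - assert (Hd : forall k, 0 < k -> Or p q a1 a2 k * Or p q a1 a2 k + Oi p a1 a2 k * Oi p a1 a2 k <> 0).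
    { intros k Hk Hz. apply Hno. exists k; split; auto. apply zero_struct; auto; nra. }
    exists (mkS (Or p q a1 a2) (Oi p a1 a2)), (mkB (Or p q a1 a2) (Oi p a1 a2) (Nr p q a1 a2) (Ni q)).
    assert (SM : smooth_pos (mkS (Or p q a1 a2) (Oi p a1 a2)) /\ smooth_pos (mkB (Or p q a1 a2) (Oi p a1 a2) (Nr p q a1 a2) (Ni q))).
    { apply smooth_mk; auto; unfold Or, Oi, Nr, Ni; smooth_tac. }
    destruct SM as [SS SB].
    split; [|split; [auto|split; [auto|]]].
    + intros lam Hl HO. set (k := qrt lam) in *. assert (Hk : 0 < k) by (apply qrt_pos; auto).
      generalize (Hd k Hk); intros Hdk.
      unfold s_fun, b_fun, mkS, mkB. fold k. rewrite N_real, Omega_real.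
      split; apply injective_projections; simpl; field; auto.
    + intros lam0 Hl0 He. exfalso. apply Hno. exists (qrt lam0). split. apply qrt_pos; auto.
      apply eig_struct; auto.
Qed.
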